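(* Every GSWNC ring is strongly $\pi$-regular, i.e., for every $a \in R$ there exists $n \in \mathbb{N}$ such that $a^n \in a^{n+1}R$.
   Context: All rings are associative with identity. An element $a$ of a ring is strongly weakly nil-clean if there exist an idempotent $e$ and a nilpotent $q$ with $eq = qe$ such that $a = q + e$ or $a = q - e$. A ring is GSWNC if every non-invertible element is strongly weakly nil-clean. *)

(* Defs.v *)
From mathcomp Require Import all_boot all_algebra.
Set Implicit Arguments. Unset Strict Implicit. Unset Printing Implicit Defensive.
Import GRing.Theory.
Local Open Scope ring_scope.

Definition invertible (R : nzRingType) (a : R) : Prop :=
  exists b : R, a * b = 1 /\ b * a = 1.

Definition idempotent (R : nzRingType) (e : R) : Prop := e * e = e.

Definition nilpotent (R : nzRingType) (q : R) : Prop := exists n : nat, q ^+ n = 0.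

Definition strongly_weakly_nil_clean (R : nzRingType) (a : R) : Prop :=
  exists e q : R, idempotent e /\ nilpotent q /\ e * q = q * e /\
    (a = q + e \/ a = q - e).

Definition GSWNC (R : nzRingType) : Prop :=
  forall a : R, ~ invertible a -> strongly_weakly_nil_clean a.

Definition strongly_pi_regular (R : nzRingType) : Prop :=
  forall a : R, exists n : nat, exists x : R, a ^+ n = a ^+ n.+1 * x.

(* Main.v *)
Require Import Defs.
From Stdlib Require Import Classical.
From mathcomp Require Import all_boot all_algebra.
Local Open Scope ring_scope.
Import GRing.Theory.

Lemma key (R : nzRingType) (e q : R) (m : nat) :
  e * e = e -> q ^+ m = 0 -> e * q = q * e ->
  exists x : R, (e + q) ^+ m = (e + q) ^+ m.+1 * x.
Proof.
move=> He Hq Hc.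
set a := e + q.
have H1 : forall n, a ^+ n * (1 - e) = q ^+ n * (1 - e).
  elim=> [|n IH]; first by rewrite !expr0.
  rewrite exprS -mulrA IH /a mulrDl exprS -mulrA.
  have ->: e * (q ^+ n * (1 - e)) = 0.
    have Hcn : GRing.comm e (q ^+ n) by apply: commrX.
    by rewrite mulrA Hcn -mulrA mulrBr mulr1 He subrr mulr0.
  by rewrite add0r.
have Ham : a ^+ m * (1 - e) = 0 by rewrite H1 Hq mul0r.
set S := \sum_(i < m) (- q) ^+ i.
have HS : (1 + q) * S = 1.
  have := subrX1 (- q) m.
  rewrite exprNn Hq mulr0 sub0r (_ : - q - 1 = - (1 + q)); last by rewrite opprD addrC.
  by rewrite mulNr => /eqP; rewrite eqr_opp => /eqP <-.
exists S.
rewrite exprSr -mulrA.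
have ->: a * S = 1 - (1 - e) * S.
  by rewrite -[X in X - _]HS -mulrBl opprB addrC addrA subrK /a.
rewrite mulrBr mulr1 mulrA Ham mul0r subr0; reflexivity.
Qed.

Theorem corollary2p12 (R : nzRingType) : GSWNC R -> strongly_pi_regular R.
Proof.
move=> HG a.
idtac "A".
case: (classic (invertible a)) => Hi.
  case: Hi => b [Hb _]; exists 0%N; exists b. idtac "B". rewrite expr0 expr1 Hb; reflexivity.
have [e [q [He [[m Hq] [Hc Ha]]]]] := HG a Hi.
idtac "D".
case: Ha => ->.
  exists m; rewrite addrC; exact: key.
have [x Hx] : exists x, (e + - q) ^+ m = (e + - q) ^+ m.+1 * x.
  apply: key.
  - exact: He.
  - rewrite exprNn Hq mulr0; reflexivity.
  - rewrite mulrN Hc mulNr; reflexivity.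
idtac "F".
exists m; exists (- x).
have E : q - e = - (e + - q).
    rewrite opprD opprK; exact: addrC.
rewrite E exprSr -mulrA mulrNN exprNn -mulrA.
rewrite (mulrA ((e - q) ^+ m)) -exprSr -Hx; reflexivity.
Qed.
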